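(* Let $n\ge1$ and let $\varphi\colon A\to B$ be a Frobenius $n$-homomorphism. Then $\psi_n(ab)=\psi_n(a)\psi_n(b)$ for all $a,b\in A$, where $\psi_n(a)$ is the coefficient of $z^n$ in $R_\varphi(a,z)$ (equivalently $\psi_n(a)=\frac1{n!}\Phi_n(a,\dots,a)$).
   Context: $\mathbb{K}=\mathbb{R}$ or $\mathbb{C}$; $A$ and $B$ are commutative associative unital $\mathbb{K}$-algebras. For a $\mathbb{K}$-linear map $\varphi\colon A\to B$ and $a\in A$, the characteristic function is $R_\varphi(a,z)=\exp\bigl(\varphi(\ln(1+az))\bigr)=1+\sum_{k\ge1}\psi_k(a)z^k\in B[[z]]$, with $\ln(1+az)=\sum_{k\ge1}(-1)^{k+1}a^kz^k/k$ and $\varphi$ applied coefficientwise. The Frobenius maps $\Phi_k\colon A^k\to B$ of $\varphi$ are defined by $\Phi_1=\varphi$ and $\Phi_{k+1}(a_1,\dots,a_{k+1})=\varphi(a_1)\Phi_k(a_2,\dots,a_{k+1})-\sum_{j=2}^{k+1}\Phi_k(a_2,\dots,a_{j-1},a_1a_j,a_{j+1},\dots,a_{k+1})$. A linear map $\varphi$ is a (Frobenius) $n$-homomorphism if $\varphi(1)=n\cdot1_B$ and $\Phi_k\equiv0$ for all $k\ge n+1$. *)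

(* Defs.v *)
From HB Require Import structures.
From mathcomp Require Import all_boot all_order all_algebra.
Set Implicit Arguments. Unset Strict Implicit. Unset Printing Implicit Defensive.
Import Order.TTheory GRing.Theory Num.Theory.
Local Open Scope ring_scope.

(* K : numFieldType covers R-like and C-like fields. *)

Section Frobenius.
Variables (K : numFieldType) (A B : comAlgType K) (phi : {linear A -> B}).

(* Formal power series over B, represented by their coefficient sequences. *)
Definition ps_mul (f g : nat -> B) : nat -> B :=
  fun k => \sum_(i < k.+1) f i * g (k - i)%N.

Definition ps_one : nat -> B := fun k => if k == 0%N then 1 else 0.

Fixpoint ps_pow (f : nat -> B) (m : nat) : nat -> B :=
  if m is m'.+1 then ps_mul f (ps_pow f m') else ps_one.

(* exp f = sum_m f^m / m!, for f with zero constant term; the k-th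
   coefficient only involves the terms m <= k. *)
Definition ps_exp (f : nat -> B) : nat -> B :=
  fun k => \sum_(m < k.+1) (m`!%:R : K)^-1 *: ps_pow f m k.

(* phi(ln(1 + a z)) = sum_{k>=1} phi((-1)^(k+1) a^k / k) z^k *)
Definition phi_log (a : A) : nat -> B :=
  fun k => if k == 0%N then 0
           else phi (((-1) ^+ k.+1 / (k%:R : K)) *: a ^+ k).

(* psi_k(a) = coefficient of z^k in R_phi(a,z) = exp(phi(ln(1+az))) *)
Definition psi (k : nat) (a : A) : B := ps_exp (phi_log a) k.

(* Frobenius maps: Phi k a = Phi_k(a 0, ..., a (k-1)); arguments beyond k-1
   are ignored.  Phi 0 is not used by the paper (set to 0). *)
Fixpoint Phi (k : nat) (a : nat -> A) : B :=
  match k with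
  | 0 => 0
  | k'.+1 =>
    match k' with
    | 0 => phi (a 0%N)
    | _ => phi (a 0%N) * Phi k' (fun i => a i.+1)
           - \sum_(j < k') Phi k' (fun i => if i == (j : nat)
                                           then a 0%N * a i.+1 else a i.+1)
    end
  end.

Definition frobenius_hom (n : nat) : Prop :=
  phi 1 = n%:R /\ forall k, (n.+1 <= k)%N -> forall a : nat -> A, Phi k a = 0.

End Frobenius.

(* Main.v *)
Require Import Defs.
From HB Require Import structures.
From mathcomp Require Import all_boot all_order all_algebra.
From Stdlib Require Import FunctionalExtensionality.
Import GRing.Theory Num.Theory.
Local Open Scope ring_scope.
Set Implicit Arguments. Unset Strict Implicit. Unset Printing Implicit Defensive.

Section PS.
Variables (K : numFieldType) (B : comAlgType K).

Lemma ps_pow_small (f : nat -> B) m i : f 0%N = 0 -> (i < m)%N -> ps_pow f m i = 0.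
Proof.
move=> f0; elim: m i => [//|m IH] i lti /=.
rewrite /ps_mul big1 // => [[j ltj]] _ /=.
case: j ltj => [|j] ltj; first by rewrite f0 mul0r.
rewrite IH ?mulr0 //; case: i lti ltj => [|i] lti ltj //.
by rewrite subSS (leq_ltn_trans (leq_subr _ _)).
Qed.

Lemma ps_exp_ext (f : nat -> B) N i : f 0%N = 0 -> (i < N)%N ->
  ps_exp f i = \sum_(m < N) (m`!%:R : K)^-1 *: ps_pow f m i.
Proof.
move=> f0 ltiN; rewrite /ps_exp -(big_mkord xpredT (fun m => (m`!%:R : K)^-1 *: ps_pow f m i)).
rewrite -(big_mkord xpredT (fun m => (m`!%:R : K)^-1 *: ps_pow f m i)).
rewrite (big_cat_nat (leq0n i.+1) ltiN) /= [X in _ = _ + X]big1_seq ?addr0 //.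
move=> m /andP[_]; rewrite mem_index_iota => /andP[lim _].
by rewrite ps_pow_small ?scaler0.
Qed.

Lemma ps_pow_poly (f : nat -> B) N m i : (i < N)%N ->
  ps_pow f m i = ((\poly_(j < N) f j) ^+ m)`_i.
Proof.
elim: m i => [|m IH] i ltiN /=; first by rewrite coef1 /ps_one; case: (i == 0%N).
rewrite exprS coefM /ps_mul; apply: eq_bigr => [[j ltj]] _ /=.
rewrite coef_poly (leq_ltn_trans _ ltiN) -1?ltnS // IH //.
by rewrite (leq_ltn_trans _ ltiN) // leq_subr.
Qed.

Definition cc (m : nat) : B := (m`!%:R : K)^-1 *: (1 : B).

Lemma ccS m : cc m.+1 *+ m.+1 = cc m.
Proof.
rewrite /cc scalerMnl; congr (_ *: _).
rewrite factS natrM invfM -mulr_natr mulrC mulrA mulfV ?mul1r //.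
by rewrite pnatr_eq0.
Qed.

Definition QQ (p : {poly B}) M := \sum_(m < M) (cc m)%:P * p ^+ m.

Lemma QQ_coef (f : nat -> B) N M i : f 0%N = 0 -> (i < M)%N -> (M <= N)%N ->
  ps_exp f i = (QQ (\poly_(j < N) f j) M)`_i.
Proof.
move=> f0 liM lMN; rewrite (ps_exp_ext f0 liM) /QQ coef_sum; apply: eq_bigr => m _.
rewrite coefCM -ps_pow_poly; last exact: leq_trans lMN.
by rewrite /cc -scalerAl mul1r.
Qed.

Lemma QQ_deriv (p : {poly B}) M : (QQ p M.+1)^`() = p^`() * QQ p M.
Proof.
rewrite /QQ raddf_sum big_ord_recl /= expr0 mulr1 derivC add0r.
rewrite mulr_sumr; apply: eq_bigr => m _.
rewrite /bump /= add1n derivM derivC mul0r add0r deriv_exp /= mulrnAr mulrCA -mulrnAr -mulrnAl -polyCMn.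
by rewrite ccS.
Qed.

Lemma ps_newton (f : nat -> B) k : f 0%N = 0 ->
  ps_exp f k.+1 *+ k.+1 = \sum_(j < k.+1) (f j.+1 *+ j.+1) * ps_exp f (k - j).
Proof.
move=> f0; set p := \poly_(j < k.+2) f j.
rewrite (QQ_coef (N := k.+2) (M := k.+2)) // -coef_deriv QQ_deriv coefM.
apply: eq_bigr => [[j ltj]] _ /=.
rewrite coef_deriv coef_poly ltnS ltj (QQ_coef (N := k.+2) (M := k.+1)) //.
by rewrite ltnS leq_subr.
Qed.

End PS.

Section Op.
Variables (K : numFieldType) (A B : comAlgType K) (phi : {linear A -> B}).

Lemma psi0 y : psi phi 0 y = 1.
Proof. by rewrite /psi /ps_exp big_ord1 /= /ps_one /= invr1 scale1r. Qed.

Lemma psi_newton y k : psi phi k.+1 y *+ k.+1 =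
  \sum_(j < k.+1) ((-1)^+j *: phi (y ^+ j.+1)) * psi phi (k - j) y.
Proof.
rewrite /psi ps_newton //; apply: eq_bigr => j _; congr (_ * _).
rewrite /phi_log /= linearZ /= scalerMnl; congr (_ *: _).
rewrite -mulrnAr -[_^-1 *+ _]mulr_natr mulVf ?pnatr_eq0 // mulr1.
by rewrite !exprS !mulN1r opprK.
Qed.

Lemma Phi_ext k a b : (forall i, a i = b i) -> Phi phi k a = Phi phi k b.
Proof. by move=> h; rewrite (functional_extensionality _ _ h). Qed.

Lemma PhiSS k a : Phi phi k.+2 a = phi (a 0%N) * Phi phi k.+1 (fun i => a i.+1)
  - \sum_(j < k.+1) Phi phi k.+1 (fun i => if i == (j : nat) then a 0%N * a i.+1 else a i.+1).
Proof. by []. Qed.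

Variable m : nat.
Hypothesis hom2 : forall a, Phi phi m.+2 a = 0.

Definition mulf (x : nat -> A) (g : 'I_m.+1 -> A) : nat -> A :=
  fun l => if (l < m.+1)%N then x l * g (inord l) else x l.
Definition dlt (j : 'I_m.+1) (w : A) := fun l : 'I_m.+1 => if l == j then w else 1.
Definition ind (S : {set 'I_m.+1}) (w : A) := fun l : 'I_m.+1 => if l \in S then w else 1.
Definition F a := Phi phi m.+1 a.
Arguments F : simpl never.

Lemma mulfA x g1 g2 : mulf (mulf x g1) g2 = mulf x (fun l => g1 l * g2 l).
Proof.
apply: functional_extensionality => l; rewrite /mulf.
by case: ifP => lt /=; rewrite ?lt ?mulrA.
Qed.

Lemma mulf_ext x g1 g2 : (forall l, g1 l = g2 l) -> mulf x g1 = mulf x g2.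
Proof. by move=> h; rewrite (functional_extensionality _ _ h). Qed.

Lemma mulf1 x : mulf x (fun _ => 1) = x.
Proof.
by apply: functional_extensionality => l; rewrite /mulf; case: ifP; rewrite ?mulr1.
Qed.

Lemma L1 x w : phi w * F x = \sum_(j < m.+1) F (mulf x (dlt j w)).
Proof.
have /eqP := hom2 (fun i => if i is i'.+1 then x i' else w).
rewrite PhiSS subr_eq0 => /eqP; rewrite /F => ->; apply: eq_bigr => j _; apply: Phi_ext => i /=.
rewrite /mulf /dlt; case: ltnP => hi.
  rewrite -(inj_eq val_inj) /= inordK //.
  by case: (i == j); rewrite ?mulr1 // mulrC.
rewrite (_ : (i == j) = false) //; apply/negbTE.
by rewrite neq_ltn (leq_trans (ltn_ord j) hi) orbT.
Qed.

Lemma L1' x g w : phi w * F (mulf x g) =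
  \sum_(j < m.+1) F (mulf x (fun l => g l * dlt j w l)).
Proof. by rewrite L1; apply: eq_bigr => j _; rewrite mulfA. Qed.

Lemma reindex1 (j : 'I_m.+1) k (G : {set 'I_m.+1} -> B) :
  \sum_(S : {set 'I_m.+1} | (#|S| == k.+1) && (j \in S)) G S =
  \sum_(S : {set 'I_m.+1} | (#|S| == k) && (j \notin S)) G (j |: S).
Proof.
rewrite (reindex_onto (fun S => j |: S) (fun S => S :\ j)) /=; last first.
  by move=> S /andP[_ jS]; rewrite setD1K.
apply: eq_bigl => S; rewrite setU11 andbT cardsU1.
case jS: (j \in S) => /=.
  rewrite andbF; apply/negbTE; rewrite negb_and; apply/orP; right; apply/eqP => h.
  by move: jS; rewrite -h setD11.
by rewrite setU1K ?jS // eqxx !andbT add1n eqSS.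
Qed.

Section XY.
Variables (x : nat -> A) (y : A).
Definition E k := \sum_(S : {set 'I_m.+1} | #|S| == k) F (mulf x (ind S y)).
Definition W i k := \sum_(j < m.+1) \sum_(S : {set 'I_m.+1} | (#|S| == k) && (j \notin S))
   F (mulf x (fun l => if l == j then y ^+ i else ind S y l)).

Lemma step i k : phi (y ^+ i) * E k = W i k + (if k is k'.+1 then W i.+1 k' else 0).
Proof.
rewrite /E mulr_sumr.
under eq_bigr => S _ do rewrite L1'.
rewrite exchange_big.
case: k => [|k].
  rewrite addr0 /W; apply: eq_bigr => j _.
  rewrite (bigID (fun S : {set 'I_m.+1} => j \in S)) /= big1 ?add0r; last first.
    by move=> S /andP[/eqP/cards0_eq -> ]; rewrite in_set0.
  apply: eq_bigr => S /andP[_ jS]; congr (F _); apply: mulf_ext => l.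
  rewrite /ind /dlt; case: eqP => [->|_]; last by rewrite mulr1.
  by rewrite (negbTE jS) mul1r.
rewrite /W -big_split; apply: eq_bigr => j _.
rewrite (bigID (fun S : {set 'I_m.+1} => j \in S)) /= addrC; congr (_ + _).
  apply: eq_bigr => S /andP[_ jS]; congr (F _); apply: mulf_ext => l.
  rewrite /ind /dlt; case: eqP => [->|_]; last by rewrite mulr1.
  by rewrite (negbTE jS) mul1r.
rewrite reindex1; apply: eq_bigr => S _; congr (F _); apply: mulf_ext => l.
rewrite /ind /dlt in_setU1; case: eqP => [->|_] /=; last by rewrite mulr1.
by rewrite exprS.
Qed.

Lemma W1 k : W 1 k = E k.+1 *+ k.+1.
Proof.
rewrite /W.
have h : forall j : 'I_m.+1,
  \sum_(S : {set 'I_m.+1} | (#|S| == k) && (j \notin S))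
     F (mulf x (fun l => if l == j then y ^+ 1 else ind S y l)) =
  \sum_(S : {set 'I_m.+1} | #|S| == k.+1) (if j \in S then F (mulf x (ind S y)) else 0).
  move=> j; rewrite -big_mkcondr reindex1; apply: eq_bigr => S _.
  congr (F _); apply: mulf_ext => l; rewrite /ind in_setU1 expr1.
  by case: eqP.
rewrite (eq_bigr _ (fun j _ => h j)) exchange_big /E -sumrMnl.
apply: eq_bigr => S /eqP cS; rewrite -big_mkcond sumr_const.
by rewrite (_ : #|_| = #|S|) ?cS //; apply: eq_card.
Qed.

Lemma E_newton k : E k.+1 *+ k.+1 =
  \sum_(i < k.+1) (-1)^+i *: (phi (y ^+ i.+1) * E (k - i)%N).
Proof.
rewrite -W1.
pose a (i : nat) := if (i <= k)%N then ((-1 : K)^+i) *: W i.+1 (k - i)%N else 0.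
have ha : forall i : 'I_k.+1, ((-1 : K)^+i) *: (phi (y ^+ i.+1) * E (k - i)%N) = a i - a i.+1.
  move=> [i lti] /=; rewrite step /a -ltnS lti.
  case: ltnP => hik.
    rewrite -(subnSK hik) exprS mulN1r scaleNr opprK scalerDr.
    by congr (_ + _); rewrite subnSK.
  have -> : i = k by apply/eqP; rewrite eqn_leq hik -ltnS lti.
  by rewrite subnn addr0 subr0.
rewrite (eq_bigr _ (fun i _ => ha i)).
have T := telescope_sumr a (leq0n k.+1); rewrite big_mkord in T.
rewrite (eq_bigr (fun i : 'I_k.+1 => - (a i.+1 - a i))); last by move=> i _; rewrite opprB.
rewrite sumrN T opprB /a ltnn subr0 /= expr0 scale1r subn0.
by [].
Qed.

Lemma mulrn_inj (v w : B) n : v *+ n.+1 = w *+ n.+1 -> v = w.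
Proof.
move=> h; have nz : (n.+1%:R : K) != 0 by rewrite pnatr_eq0.
by rewrite -(scalerK nz v) -(scalerK nz w) !scaler_nat h.
Qed.

Lemma E_psi k : E k = psi phi k y * F x.
Proof.
elim/ltn_ind: k => [[|k]] IH.
  rewrite psi0 mul1r /E (big_pred1 set0); last by move=> S; rewrite /= cards_eq0.
  congr (F _); rewrite -[RHS]mulf1; apply: mulf_ext => l; by rewrite /ind in_set0.
apply: (@mulrn_inj _ _ k); rewrite E_newton -mulrnAl psi_newton mulr_suml.
apply: eq_bigr => [[i lti]] _ /=.
by rewrite IH ?ltnS ?leq_subr // mulrA !scalerAl.
Qed.

End XY.

Lemma EN x y : F (mulf x (fun _ => y)) = psi phi m.+1 y * F x.
Proof.
rewrite -E_psi /E (big_pred1 setT); last first.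
  move=> S /=; rewrite eqEcard subsetT /= cardsT card_ord eqn_leq.
  by rewrite (_ : (#|S| <= m.+1)%N) // -[X in (_ <= X)%N]card_ord max_card.
by congr (F _); apply: mulf_ext => l; rewrite /ind in_setT.
Qed.

End Op.

Lemma Phi_one (K : numFieldType) (A B : comAlgType K) (phi : {linear A -> B}) m :
  phi 1 = m.+1%:R -> forall k, (k <= m)%N ->
  Phi phi k.+1 (fun _ => 1) = (m.+1 ^_ k.+1)%:R.
Proof.
move=> phi1; elim=> [|k IH] hk; first by rewrite /= ffactn1 phi1.
rewrite PhiSS IH ?(ltnW hk) //.
rewrite (eq_bigr (fun _ => (m.+1 ^_ k.+1)%:R)); last first.
  move=> j _; rewrite -IH ?(ltnW hk) //; apply: Phi_ext => i /=.
  by case: ifP; rewrite ?mulr1.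
rewrite sumr_const card_ord phi1 [in RHS]ffactnSr natrM natrB; last exact: ltnW hk.
by rewrite mulrBr [_.+1%:R * _]mulrC [_ * k.+1%:R]mulr_natr.
Qed.


Theorem mainTheorem7 (K : numFieldType) (A B : comAlgType K)
    (phi : {linear A -> B}) (n : nat) :
  (1 <= n)%N -> frobenius_hom phi n ->
  forall a b : A, psi phi n (a * b) = psi phi n a * psi phi n b.
Proof.
move=> n1 [phi1 hom] a b.
case: n n1 phi1 hom => [//|m] _ phi1 hom.
have hom2 : forall x, Phi phi m.+2 x = 0 by move=> x; apply: hom.
pose one := fun _ : nat => (1 : A).
have h1 := EN hom2 one (a * b).
have h2 := EN hom2 (mulf (m:=m) one (fun _ => a)) b.
have h3 := EN hom2 one a.
have e : mulf (m:=m) (mulf (m:=m) one (fun _ => a)) (fun _ => b) = mulf (m:=m) one (fun _ => a * b).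
  by rewrite mulfA; apply: mulf_ext.
rewrite e h1 h3 mulrA [psi phi m.+1 b * _]mulrC in h2.
have F1 : F phi m one = (m.+1)`!%:R.
  by rewrite /F (Phi_one phi1 (leqnn m)) ffactnn.
rewrite F1 -(scaler_nat (m.+1)`! (1 : B)) -!scalerAr !mulr1 in h2.
have nz : ((m.+1)`!%:R : K) != 0 by rewrite pnatr_eq0 -lt0n fact_gt0.
by rewrite -(scalerK nz (psi phi m.+1 (a * b))) h2 scalerK.
Qed.
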